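(* Let $C\subset\mathbb{R}^2$ be a centrally symmetric convex body and $P=(G,p,r)$ a $C$-packing. If $C$ is not a parallelogram, then $(G,p)$ is a planar framework.
   Context: A centrally symmetric convex body is a compact convex set with non-empty interior and $C=-C$. A $C$-packing $(G,p,r)$ is a finite family $\{r_vC+p_v:v\in V\}$ ($r_v>0$, $p_v\in\mathbb{R}^2$) with pairwise disjoint interiors, whose contact graph $G=(V,E)$ has $vw\in E$ iff $r_vC+p_v$ and $r_wC+p_w$ intersect. A framework $(G,p)$ is planar if $p_v\ne p_w$ for distinct $v,w$ and the segments $[p_v,p_w]$, $vw\in E$, intersect each other only at common endpoints. *)

(* Defs.v *)
From mathcomp Require Import all_boot all_order all_algebra.
From mathcomp Require Import all_classical all_reals all_analysis.
Import numFieldNormedType.Exports.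
Set Implicit Arguments. Unset Strict Implicit. Unset Printing Implicit Defensive.
Import Order.TTheory GRing.Theory Num.Theory.
Local Open Scope classical_set_scope.
Local Open Scope ring_scope.

Section Defs.
Variable R : realType.
Notation pt := 'rV[R]_2.

Definition segment (a b : pt) : set pt :=
  [set x | exists t : R, 0 <= t <= 1 /\ x = (1 - t) *: a + t *: b].

Definition convex_set (C : set pt) : Prop :=
  forall x y, C x -> C y -> forall t : R, 0 <= t <= 1 -> C ((1 - t) *: x + t *: y).

Definition cs_convex_body (C : set pt) : Prop :=
  [/\ compact C, convex_set C, interior C !=set0 & forall x, C x <-> C (- x)].

Definition parallelogram (C : set pt) : Prop :=
  exists x0 u v : pt,
    (forall a b : R, a *: u + b *: v = 0 -> a = 0 /\ b = 0) /\
    C = [set x | exists s t : R, 0 <= s <= 1 /\ 0 <= t <= 1 /\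
                   x = x0 + s *: u + t *: v].

Definition homot (C : set pt) (r : R) (p : pt) : set pt :=
  [set r *: c + p | c in C].

Definition is_packing (V : finType) (C : set pt) (p : V -> pt) (r : V -> R) : Prop :=
  (forall v, 0 < r v) /\
  (forall v w, v != w ->
     interior (homot C (r v) (p v)) `&` interior (homot C (r w) (p w)) = set0).

Definition contact (V : finType) (C : set pt) (p : V -> pt) (r : V -> R) (v w : V) : Prop :=
  v != w /\ homot C (r v) (p v) `&` homot C (r w) (p w) !=set0.

Definition planar_framework (V : finType) (E : V -> V -> Prop) (p : V -> pt) : Prop :=
  (forall v w, v != w -> p v != p w) /\
  (forall v w v' w', E v w -> E v' w' ->
     ~ ((v == v' /\ w == w') \/ (v == w' /\ w == v')) ->
     forall x, segment (p v) (p w) x -> segment (p v') (p w') x ->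
       (x = p v \/ x = p w) /\ (x = p v' \/ x = p w')).
End Defs.

(* Main.v *)
Require Import Defs.
From mathcomp Require Import all_boot all_order all_algebra.
From mathcomp Require Import all_classical all_reals all_analysis.
From mathcomp Require Import ring lra.
Import numFieldNormedType.Exports.
Import Order.TTheory GRing.Theory Num.Theory.
Set Implicit Arguments. Unset Strict Implicit.
Local Open Scope classical_set_scope.
Local Open Scope ring_scope.
Section S.
Variable R : realType.
Notation pt := 'rV[R]_2.

Lemma interiorE (C : set pt) z : interior C z <-> exists e : R, 0 < e /\ forall y, `|z - y| < e -> C y.
Proof.
split.
  rewrite /interior /= => /nbhs_ballP [e e0 he].
  exists e; split => // y hy; apply: he. by rewrite -ball_normE.
move=> [e [e0 he]]; rewrite /interior /=; apply/nbhs_ballP; exists e => // y.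
rewrite -ball_normE /=; exact: he.
Qed.

Lemma int_comb (C : set pt) z y th : Defs.convex_set C -> interior C z -> C y ->
  0 < th <= 1 -> interior C (th *: z + (1 - th) *: y).
Proof.
move=> hc /interiorE [e [e0 he]] Cy /andP [th0 th1].
apply/interiorE; exists (th * e); split; first by rewrite mulr_gt0.
move=> q hq.
pose zz := th^-1 *: (q - (1 - th) *: y).
have -> : q = (1 - th) *: y + th *: zz.
  rewrite /zz scalerA mulfV ?gt_eqF // scale1r addrC subrK //.
apply: (hc y zz Cy _ th); last by rewrite th1 ltW.
apply: he.
have -> : z - zz = th^-1 *: (th *: z + (1 - th) *: y - q).
  rewrite /zz !scalerBr scalerDr (scalerA th^-1 th) mulVf ?gt_eqF // scale1r.
  by rewrite opprB addrA.
rewrite mx_normZ ger0_norm ?invr_ge0 ?ltW // mulrC ltr_pdivrMr //.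
by rewrite mulrC.
Qed.

Variable C : set pt.
Hypothesis hconv : Defs.convex_set C.
Hypothesis hsym : forall x, C x <-> C (- x).
Hypothesis hne : interior C !=set0.

Lemma C_neg x : C x -> C (- x).
Proof. by move/hsym. Qed.

Lemma conv x y t : C x -> C y -> 0 <= t -> t <= 1 -> C ((1 - t) *: x + t *: y).
Proof. move=> Cx Cy t0 t1; by apply: (hconv Cx Cy); rewrite t0 t1. Qed.

Lemma int_neg z : interior C z -> interior C (- z).
Proof.
move=> /interiorE [e [e0 he]]; apply/interiorE; exists e; split => // y hy.
apply/hsym; apply: he.
have -> : z - - y = - (- z - y) by apply/rowP => i; rewrite !mxE; ring.
by rewrite normrN.
Qed.

Lemma int_sub z : interior C z -> C z.
Proof. by move=> h; apply: interior_subset. Qed.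

Lemma int0 : interior C 0.
Proof.
case: hne => z hz.
have h2 : 0 < (2^-1 : R) <= 1 by apply/andP; split; lra.
have := int_comb hconv hz (int_sub (int_neg hz)) h2.
have -> : 2^-1 *: z + (1 - 2^-1) *: - z = 0 :> pt.
  by apply/rowP => i; rewrite !mxE; field.
by [].
Qed.

Lemma C0 : C 0.
Proof. exact: int_sub int0. Qed.

Lemma shrink y l : C y -> 0 <= l -> l < 1 -> interior C (l *: y).
Proof.
move=> Cy l0 l1.
have h2 : 0 < 1 - l <= 1 by apply/andP; split; lra.
have := int_comb hconv int0 Cy h2.
by rewrite scaler0 add0r opprB addrC subrK.
Qed.

Lemma lam_int y l : C y -> -1 < l -> l < 1 -> interior C (l *: y).
Proof.
move=> Cy l0 l1; case: (lerP 0 l) => hl; first exact: shrink.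
have -> : l *: y = (- l) *: (- y) by rewrite scaleNr scalerN opprK.
apply: shrink; [exact: C_neg | lra | lra].
Qed.

Lemma sub2 x y a b : C x -> C y -> 0 <= a -> 0 <= b -> a + b < 1 ->
  interior C (a *: x + b *: y).
Proof.
move=> Cx Cy a0 b0 ab.
case: (lerP (a + b) 0) => hs.
  have -> : a = 0 by lra.
  have -> : b = 0 by lra.
  rewrite !scale0r addr0; exact: int0.
have -> : a *: x + b *: y = (a + b) *: ((1 - b / (a + b)) *: x + (b / (a + b)) *: y).
  by apply/rowP => i; rewrite !mxE; field; rewrite gt_eqF.
apply: shrink => //; [apply: conv => // | lra].
  by apply: divr_ge0 => //; lra.
by rewrite ler_pdivrMr //; lra.
Qed.

Lemma ge_of_NO x y a b rho : C x -> C y -> 0 <= a -> 0 <= b -> 0 < rho ->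
  ~ interior C (rho^-1 *: (a *: x + b *: y)) -> rho <= a + b.
Proof.
move=> Cx Cy a0 b0 r0 hn; case: (lerP rho (a + b)) => // h; exfalso; apply: hn.
rewrite scalerDr !scalerA; apply: sub2 => //.
- by apply: mulr_ge0 => //; rewrite invr_ge0 ltW.
- by apply: mulr_ge0 => //; rewrite invr_ge0 ltW.
by rewrite -mulrDr mulrC ltr_pdivrMr // mul1r.
Qed.


Lemma sub3 x y z a b c : C x -> C y -> C z -> 0 <= a -> 0 <= b -> 0 <= c ->
  a + b + c < 1 -> interior C (a *: x + b *: y + c *: z).
Proof.
move=> Cx Cy Cz a0 b0 c0 abc.
case: (lerP (b + c) 0) => hs.
  have -> : b = 0 by lra.
  have -> : c = 0 by lra.
  rewrite !scale0r !addr0 -[a *: x]addr0 -(scale0r x).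
  apply: sub2 => //; lra.
have -> : a *: x + b *: y + c *: z =
   a *: x + (b + c) *: ((1 - c / (b + c)) *: y + (c / (b + c)) *: z).
  by apply/rowP => i; rewrite !mxE; field; rewrite gt_eqF.
apply: sub2 => //; try lra; apply: conv => //.
  by apply: divr_ge0 => //; lra.
by rewrite ler_pdivrMr //; lra.
Qed.

Lemma beyond U W m p q : C U -> C W -> 0 < m -> m < 1 ->
  C (p *: U + q *: W) -> 1 < p + q -> interior C (m *: U + (1 - m) *: W).
Proof.
move=> CU CW m0 m1 Cy hpq.
pose K := 1 + p ^+ 2 + q ^+ 2.
have K0 : 0 < K by rewrite /K; nra.
pose k := m * (1 - m) / K.
have k0 : 0 < k by rewrite /k; apply: divr_gt0 => //; nra.
have kK : k * K = m * (1 - m) by rewrite /k; field; rewrite gt_eqF.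
have pK : p <= K by rewrite /K; nra.
have qK : q <= K by rewrite /K; nra.
have kp : k * p <= m by nra.
have kq : k * q <= 1 - m by nra.
have -> : m *: U + (1 - m) *: W =
   k *: (p *: U + q *: W) + (m - k * p) *: U + (1 - m - k * q) *: W.
  by apply/rowP => i; rewrite !mxE; ring.
apply: sub3 => //; try lra; nra.
Qed.


Definition det2 (u w : pt) := u 0 0 * w 0 1 - u 0 1 * w 0 0.

Lemma ord2_cases (i : 'I_2) : i = 0 \/ i = 1.
Proof. by case: i => [[|[|//]]] hi; [left|right]; apply/val_inj. Qed.

Lemma decomp (u w y : pt) : det2 u w != 0 ->
  y = ((y 0 0 * w 0 1 - y 0 1 * w 0 0) / det2 u w) *: u +
      ((u 0 0 * y 0 1 - u 0 1 * y 0 0) / det2 u w) *: w.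
Proof.
rewrite /det2 => hd; apply/rowP => i; rewrite !mxE.
by case: (ord2_cases i) => ->; field.
Qed.

Lemma para u w m1 m2 m3 m4 : C u -> C w -> det2 u w != 0 ->
  0 < m1 < 1 -> 0 < m2 < 1 -> 0 < m3 < 1 -> 0 < m4 < 1 ->
  ~ interior C (m4 *: u + (1 - m4) *: w) ->
  ~ interior C (m1 *: (- u) + (1 - m1) *: w) ->
  ~ interior C (m2 *: u + (1 - m2) *: (- w)) ->
  ~ interior C (m3 *: (- u) + (1 - m3) *: (- w)) ->
  parallelogram C.
Proof.
move=> Cu Cw hd /andP[m1a m1b] /andP[m2a m2b] /andP[m3a m3b] /andP[m4a m4b] n4 n1 n2 n3.
exists (- u), (u + w), (u - w); split.
  move=> a b hab.
  have e0 : a * (u 0 0 + w 0 0) + b * (u 0 0 - w 0 0) = 0.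
    by move: (congr1 (fun M : pt => M 0 0) hab); rewrite !mxE.
  have e1 : a * (u 0 1 + w 0 1) + b * (u 0 1 - w 0 1) = 0.
    by move: (congr1 (fun M : pt => M 0 1) hab); rewrite !mxE.
  have h1 : (a + b) * det2 u w = w 0 1 * (a * (u 0 0 + w 0 0) + b * (u 0 0 - w 0 0))
      - w 0 0 * (a * (u 0 1 + w 0 1) + b * (u 0 1 - w 0 1)) by rewrite /det2; ring.
  have h2 : (a - b) * det2 u w = - u 0 1 * (a * (u 0 0 + w 0 0) + b * (u 0 0 - w 0 0))
      + u 0 0 * (a * (u 0 1 + w 0 1) + b * (u 0 1 - w 0 1)) by rewrite /det2; ring.
  rewrite e0 e1 !mulr0 subrr in h1; rewrite e0 e1 !mulr0 addr0 in h2.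
  move/eqP: h1; rewrite mulf_eq0 (negbTE hd) orbF => /eqP h1.
  move/eqP: h2; rewrite mulf_eq0 (negbTE hd) orbF => /eqP h2.
  split; lra.
apply: funext => y; apply: propext; split.
  move=> Cy.
  set p := (y 0 0 * w 0 1 - y 0 1 * w 0 0) / det2 u w.
  set q := (u 0 0 * y 0 1 - u 0 1 * y 0 0) / det2 u w.
  have hy : y = p *: u + q *: w by exact: decomp.
  have a1 : p + q <= 1.
    case: (lerP (p + q) 1) => // h; exfalso; apply: n4.
    by apply: (beyond Cu Cw m4a m4b _ h); rewrite -hy.
  have a2 : - p - q <= 1.
    case: (lerP (- p - q) 1) => // h; exfalso; apply: n3.
    apply: (beyond (C_neg Cu) (C_neg Cw) m3a m3b _ h).
    by rewrite !scaleNr !scalerN !opprK -hy.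
  have a3 : p - q <= 1.
    case: (lerP (p - q) 1) => // h; exfalso; apply: n2.
    apply: (beyond Cu (C_neg Cw) m2a m2b _ h).
    by rewrite !scaleNr !scalerN !opprK -hy.
  have a4 : - p + q <= 1.
    case: (lerP (- p + q) 1) => // h; exfalso; apply: n1.
    apply: (beyond (C_neg Cu) Cw m1a m1b _ h).
    by rewrite !scaleNr !scalerN !opprK -hy.
  exists ((1 + p + q) / 2), ((1 + p - q) / 2); split; [|split].
  - by apply/andP; split; lra.
  - by apply/andP; split; lra.
  by rewrite hy; apply/rowP => i; rewrite !mxE; field.
move=> [s [t [/andP[s0 s1] [/andP[t0 t1] ->]]]].
have -> : - u + s *: (u + w) + t *: (u - w) =
  (1 - t) *: ((1 - s) *: (- u) + s *: w) + t *: ((1 - s) *: (- w) + s *: u).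
  by apply/rowP => i; rewrite !mxE; ring.
have Cnu := C_neg Cu; have Cnw := C_neg Cw.
by apply: conv => //; apply: conv.
Qed.


Lemma dep u w m1 m4 : C u -> C w -> ~ interior C u -> det2 u w = 0 ->
  0 < m1 < 1 -> 0 < m4 < 1 ->
  ~ interior C (m4 *: u + (1 - m4) *: w) ->
  ~ interior C (m1 *: (- u) + (1 - m1) *: w) -> False.
Proof.
move=> Cu Cw nu hd /andP[m1a m1b] /andP[m4a m4b] n4 n1.
have [k hk] : exists k : R, w = k *: u.
  case: (eqVneq (u 0 0) 0) => h0.
    case: (eqVneq (u 0 1) 0) => h1.
      exfalso; apply: nu.
      have -> : u = 0 by apply/rowP => i; rewrite !mxE; case: (ord2_cases i) => ->.
      exact: int0.
    exists (w 0 1 / u 0 1); apply/rowP => i; rewrite !mxE.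
    move: hd; rewrite /det2 h0 mul0r sub0r => /eqP; rewrite oppr_eq0 mulf_eq0 (negbTE h1) /= => /eqP hw.
    by case: (ord2_cases i) => ->; [rewrite h0 hw mulr0 | field].
  exists (w 0 0 / u 0 0); apply/rowP => i; rewrite !mxE.
  case: (ord2_cases i) => ->; first by field.
  move: hd; rewrite /det2 => /eqP; rewrite subr_eq0 => /eqP hw.
  apply: (mulfI h0); rewrite hw; field => //.
case: (lerP k 1) => k1; last first.
  apply: nu; have -> : u = k^-1 *: w.
    have kk : k^-1 * k = 1 by rewrite mulVf // gt_eqF // (lt_trans ltr01 k1).
    by rewrite hk scalerA kk scale1r.
  apply: shrink => //; [rewrite invr_ge0; lra | rewrite invf_lt1; lra].
case: (lerP (-1) k) => k2; last first.
  apply: nu; have -> : u = (- k)^-1 *: (- w).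
    have k0 : 0 < - k by lra.
    have kk : (- k)^-1 * (- k) = 1 by rewrite mulVf // gt_eqF.
    rewrite hk; apply/rowP => i; rewrite !mxE; field; rewrite lt_eqF //; lra.
  apply: shrink; [exact: C_neg | rewrite invr_ge0; lra | rewrite invf_lt1; lra].
case: (lerP 0 k) => k3.
  apply: n1; have -> : m1 *: - u + (1 - m1) *: w = (- m1 + (1 - m1) * k) *: u.
    by rewrite hk; apply/rowP => i; rewrite !mxE; ring.
  apply: lam_int => //; nra.
apply: n4; have -> : m4 *: u + (1 - m4) *: w = (m4 + (1 - m4) * k) *: u.
  by rewrite hk; apply/rowP => i; rewrite !mxE; ring.
apply: lam_int => //; nra.
Qed.


Lemma mform (x y : pt) a b : 0 < a + b ->
  (a + b)^-1 *: (a *: x + b *: y) = (a / (a + b)) *: x + (1 - a / (a + b)) *: y.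
Proof. by move=> h; apply/rowP => i; rewrite !mxE; field; rewrite gt_eqF. Qed.

Lemma mu01 (a b : R) : 0 < a -> 0 < b -> 0 < a / (a + b) < 1.
Proof.
move=> a0 b0; apply/andP; split; first by apply: divr_gt0 => //; lra.
by rewrite ltr_pdivrMr; lra.
Qed.

Lemma cross a b c d u wv ra rb rc rd s t : C u -> C wv -> ~ interior C u ->
  0 < ra -> 0 < rb -> 0 < rc -> 0 < rd -> 0 < s -> s < 1 -> 0 < t -> t < 1 ->
  b = a + (ra + rb) *: u -> d = c + (rc + rd) *: wv ->
  ~ interior C ((ra + rc)^-1 *: (c - a)) -> ~ interior C ((ra + rd)^-1 *: (d - a)) ->
  ~ interior C ((rb + rc)^-1 *: (c - b)) -> ~ interior C ((rb + rd)^-1 *: (d - b)) ->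
  a + (s * (ra + rb)) *: u = c + (t * (rc + rd)) *: wv -> parallelogram C.
Proof.
move=> Cu Cw nu ra0 rb0 rc0 rd0 s0 s1 t0 t1 hb hd nac nad nbc nbd hx.
have Cnu := C_neg Cu; have Cnw := C_neg Cw.
set al := s * (ra + rb); set be := (1 - s) * (ra + rb).
set ga := t * (rc + rd); set de := (1 - t) * (rc + rd).
have al0 : 0 < al by rewrite /al; nra.
have be0 : 0 < be by rewrite /be; nra.
have ga0 : 0 < ga by rewrite /ga; nra.
have de0 : 0 < de by rewrite /de; nra.
have sab : al + be = ra + rb by rewrite /al /be; ring.
have scd : ga + de = rc + rd by rewrite /ga /de; ring.
have hx' : a + al *: u = c + ga *: wv by [].
rewrite -sab in hb; rewrite -scd in hd.
clearbody al be ga de; clear hx.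
have hxi : forall i, a 0 i + al * u 0 i = c 0 i + ga * wv 0 i.
  by move=> i; move: (congr1 (fun M : pt => M 0 i) hx'); rewrite !mxE.
have Eca : c - a = al *: u + ga *: (- wv).
  by apply/rowP => i; rewrite !mxE; have := hxi i; lra.
have Eda : d - a = al *: u + de *: wv.
  by rewrite hd; apply/rowP => i; rewrite !mxE; have := hxi i; lra.
have Ecb : c - b = be *: (- u) + ga *: (- wv).
  by rewrite hb; apply/rowP => i; rewrite !mxE; have := hxi i; lra.
have Edb : d - b = be *: (- u) + de *: wv.
  by rewrite hb hd; apply/rowP => i; rewrite !mxE; have := hxi i; lra.
have i1 : ra + rc <= al + ga.
  have hp : 0 < ra + rc by apply: addr_gt0.
  apply: (ge_of_NO Cu Cnw (ltW al0) (ltW ga0) hp); move: nac; rewrite Eca; exact.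
have i2 : ra + rd <= al + de.
  have hp : 0 < ra + rd by apply: addr_gt0.
  apply: (ge_of_NO Cu Cw (ltW al0) (ltW de0) hp); move: nad; rewrite Eda; exact.
have i3 : rb + rc <= be + ga.
  have hp : 0 < rb + rc by apply: addr_gt0.
  apply: (ge_of_NO Cnu Cnw (ltW be0) (ltW ga0) hp); move: nbc; rewrite Ecb; exact.
have i4 : rb + rd <= be + de.
  have hp : 0 < rb + rd by apply: addr_gt0.
  apply: (ge_of_NO Cnu Cw (ltW be0) (ltW de0) hp); move: nbd; rewrite Edb; exact.
have q1 : ra + rc = al + ga by lra.
have q2 : ra + rd = al + de by lra.
have q3 : rb + rc = be + ga by lra.
have q4 : rb + rd = be + de by lra.
have p1 : 0 < al + ga by lra.
have p2 : 0 < al + de by lra.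
have p3 : 0 < be + ga by lra.
have p4 : 0 < be + de by lra.
move: nac; rewrite Eca q1 (mform _ _ p1) => nac.
move: nad; rewrite Eda q2 (mform _ _ p2) => nad.
move: nbc; rewrite Ecb q3 (mform _ _ p3) => nbc.
move: nbd; rewrite Edb q4 (mform _ _ p4) => nbd.
case: (eqVneq (det2 u wv) 0) => hdet.
  exfalso; exact: (dep Cu Cw nu hdet (mu01 be0 de0) (mu01 al0 de0) nad nbd).
exact: (para Cu Cw hdet (mu01 be0 de0) (mu01 al0 ga0) (mu01 be0 ga0) (mu01 al0 de0) nad nbd nac nbc).
Qed.



Lemma int_homot c rr q : 0 < rr -> interior C c -> interior (Defs.homot C rr q) (rr *: c + q).
Proof.
move=> r0 /interiorE [e [e0 he]]; apply/interiorE; exists (rr * e); split.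
  by rewrite mulr_gt0.
move=> y hy; exists (rr^-1 *: (y - q)); last first.
  by apply/rowP => i; rewrite !mxE; field; rewrite gt_eqF.
apply: he.
have -> : c - rr^-1 *: (y - q) = rr^-1 *: (rr *: c + q - y).
  by apply/rowP => i; rewrite !mxE; field; rewrite gt_eqF.
rewrite mx_normZ ger0_norm ?invr_ge0 ?ltW // mulrC ltr_pdivrMr //.
by rewrite mulrC.
Qed.

End S.

Section P.
Variable R : realType.
Notation pt := 'rV[R]_2.
Variable C : set pt.
Hypothesis hconv : Defs.convex_set C.
Hypothesis hsym : forall x, C x <-> C (- x).
Hypothesis hne : interior C !=set0.
Variable V : finType.
Variable p : V -> pt.
Variable r : V -> R.
Hypothesis hpack : is_packing C p r.

Lemma rpos v : 0 < r v.
Proof. exact: hpack.1. Qed.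

Lemma contact_C v w : contact C p r v w -> C ((r v + r w)^-1 *: (p w - p v)).
Proof.
move=> [_ [y [[c1 Cc1 e1] [c2 Cc2 e2]]]].
have rv := rpos v; have rw := rpos w.
have -> : (r v + r w)^-1 *: (p w - p v) =
   (1 - r w / (r v + r w)) *: c1 + (r w / (r v + r w)) *: (- c2).
  apply/rowP => i; rewrite !mxE.
  have h1 := congr1 (fun M : pt => M 0 i) e1; have h2 := congr1 (fun M : pt => M 0 i) e2.
  move: h1 h2; rewrite /= !mxE => h1 h2.
  have -> : p w 0 i - p v 0 i = r v * c1 0 i - r w * c2 0 i by lra.
  by field; rewrite gt_eqF //; lra.
have t0 : 0 <= r w / (r v + r w) by apply: divr_ge0; lra.
have t1 : r w / (r v + r w) <= 1 by rewrite ler_pdivrMr; lra.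
exact: (conv hconv Cc1 (C_neg hsym Cc2) t0 t1).
Qed.

Lemma NO v w : v != w -> ~ interior C ((r v + r w)^-1 *: (p w - p v)).
Proof.
move=> hvw hu.
have rv := rpos v; have rw := rpos w.
set u := (r v + r w)^-1 *: (p w - p v) in hu.
have h1 := int_homot (p v) rv hu.
have h2 := int_homot (p w) rw (int_neg hsym hu).
have e : r w *: - u + p w = r v *: u + p v.
  by rewrite /u; apply/rowP => i; rewrite !mxE; field; rewrite gt_eqF //; lra.
rewrite e in h2.
have := hpack.2 v w hvw.
move/(congr1 (fun S : set pt => S (r v *: u + p v))).
by rewrite /=; move=> <-; split.
Qed.


Lemma center v w z s : contact C p r v w -> z != v -> z != w ->
  p z = (1 - s) *: p v + s *: p w -> 0 <= s -> s <= 1 -> False.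
Proof.
move=> hc hzv hzw hz s0 s1.
have rv := rpos v; have rw := rpos w; have rz := rpos z.
have Cu := contact_C hc.
set u := (r v + r w)^-1 *: (p w - p v) in Cu.
have h1 : ~ interior C ((r v + r z)^-1 *: (p z - p v)) by apply: NO; rewrite eq_sym.
have h2 : ~ interior C ((r w + r z)^-1 *: (p z - p w)) by apply: NO; rewrite eq_sym.
have e1 : p z - p v = (s * (r v + r w)) *: u + 0 *: u.
  by rewrite /u hz; apply/rowP => i; rewrite !mxE; field; rewrite gt_eqF //; lra.
have e2 : p z - p w = ((1 - s) * (r v + r w)) *: (- u) + 0 *: (- u).
  by rewrite /u hz; apply/rowP => i; rewrite !mxE; field; rewrite gt_eqF //; lra.
have i1 : r v + r z <= s * (r v + r w) + 0.
  have hp : 0 < r v + r z by lra.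
  have ha : 0 <= s * (r v + r w) by apply: mulr_ge0 => //; lra.
  apply: (ge_of_NO hconv hsym hne Cu Cu ha (lexx 0) hp); move: h1; rewrite e1; exact.
have i2 : r w + r z <= (1 - s) * (r v + r w) + 0.
  have hp : 0 < r w + r z by lra.
  have ha : 0 <= (1 - s) * (r v + r w) by apply: mulr_ge0 => //; lra.
  have Cnu := C_neg hsym Cu.
  apply: (ge_of_NO hconv hsym hne Cnu Cnu ha (lexx 0) hp); move: h2; rewrite e2; exact.
clear h1 h2 e1 e2 Cu u hz; lra.
Qed.

Lemma contact_sym v w : contact C p r v w -> contact C p r w v.
Proof. by move=> [h [y [h1 h2]]]; split; [rewrite eq_sym | exists y]. Qed.

Lemma shared_half z y1 y2 s t : contact C p r z y1 -> contact C p r z y2 -> y1 != y2 ->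
  (1 - s) *: p z + s *: p y1 = (1 - t) *: p z + t *: p y2 ->
  0 < s -> s <= t -> False.
Proof.
move=> c1 c2 hy hx s0 st.
have t0 : 0 < t by lra.
have n1 : y2 != z by rewrite eq_sym; case: c2.
have n2 : y2 != y1 by rewrite eq_sym.
have q0 : 0 <= s / t by apply: divr_ge0; lra.
have q1 : s / t <= 1 by rewrite ler_pdivrMr; lra.
have tn : t != 0 by rewrite gt_eqF.
have e : p y2 = (1 - s / t) *: p z + (s / t) *: p y1.
  apply/rowP => i; rewrite !mxE.
  have := congr1 (fun M : pt => M 0 i) hx; rewrite /= !mxE => hi.
  apply: (mulfI tn).
  have -> : t * ((1 - s / t) * p z 0 i + s / t * p y1 0 i) = t * p z 0 i - s * p z 0 i + s * p y1 0 i.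
    by field.
  clear -hi; lra.
exact: (center c1 n1 n2 e q0 q1).
Qed.

Lemma shared z y1 y2 s t : contact C p r z y1 -> contact C p r z y2 -> y1 != y2 ->
  (1 - s) *: p z + s *: p y1 = (1 - t) *: p z + t *: p y2 ->
  0 < s -> 0 < t -> False.
Proof.
move=> c1 c2 hy hx s0 t0; case: (lerP s t) => st.
  exact: (shared_half c1 c2 hy hx s0 st).
have := shared_half c2 c1 (_ : y2 != y1) (esym hx) t0 (ltW st); apply.
by rewrite eq_sym.
Qed.


Lemma crossV v w v' w' s t : contact C p r v w -> contact C p r v' w' ->
  v != v' -> v != w' -> w != v' -> w != w' ->
  (1 - s) *: p v + s *: p w = (1 - t) *: p v' + t *: p w' ->
  0 < s -> s < 1 -> 0 < t -> t < 1 -> parallelogram C.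
Proof.
move=> c1 c2 h1 h2 h3 h4 hx s0 s1 t0 t1.
have rv := rpos v; have rw := rpos w; have rv' := rpos v'; have rw' := rpos w'.
have Cu := contact_C c1; have Cw := contact_C c2.
have nu := NO (_ : v != w); have nac := NO h1; have nad := NO h2.
have nbc := NO h3; have nbd := NO h4.
have hvw : v != w by case: c1.
have R1 : r v + r w != 0 by rewrite gt_eqF //; lra.
have R2 : r v' + r w' != 0 by rewrite gt_eqF //; lra.
apply: (cross hconv hsym hne Cu Cw (nu hvw) rv rw rv' rw' s0 s1 t0 t1 _ _ nac nad nbc nbd).
- by apply/rowP => i; rewrite !mxE; field.
- by apply/rowP => i; rewrite !mxE; field.
apply/rowP => i; rewrite !mxE.
have := congr1 (fun M : pt => M 0 i) hx; rewrite /= !mxE => hi.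
have -> : s * (r v + r w) * ((r v + r w)^-1 * (p w 0 i - p v 0 i)) = s * (p w 0 i - p v 0 i) by field.
have -> : t * (r v' + r w') * ((r v' + r w')^-1 * (p w' 0 i - p v' 0 i)) = t * (p w' 0 i - p v' 0 i) by field.
clear -hi; lra.
Qed.

End P.

Lemma flip (R : realType) (a b : 'rV[R]_2) s : (1 - s) *: a + s *: b = (1 - (1 - s)) *: b + (1 - s) *: a.
Proof. by apply/rowP => i; rewrite !mxE; ring. Qed.

Theorem lemma3p11 (R : realType) (C : set 'rV[R]_2) (V : finType)
  (p : V -> 'rV[R]_2) (r : V -> R) :
  cs_convex_body C -> is_packing C p r -> ~ parallelogram C ->
  planar_framework (contact C p r) p.
Proof.
move=> [_ hconv hne hsym] hpack hnp.
have endp : forall z v w t, contact C p r v w -> p z = (1 - t) *: p v + t *: p w ->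
    0 <= t -> t <= 1 -> p z = p v \/ p z = p w.
  move=> z v w t c hz t0 t1.
  case: (eqVneq z v) => [->|hzv]; first by left.
  case: (eqVneq z w) => [->|hzw]; first by right.
  exfalso; exact: (center hconv hsym hne hpack c hzv hzw hz t0 t1).
split.
  move=> v w hvw; apply/eqP => e.
  apply: (NO hsym hpack hvw).
  rewrite e subrr scaler0; exact: (int0 hconv hsym hne).
move=> v w v' w' c1 c2 hdiff x [s [/andP[s0 s1] hxs]] [t [/andP[t0 t1] hxt]].
have hx : (1 - s) *: p v + s *: p w = (1 - t) *: p v' + t *: p w' by rewrite -hxs -hxt.
case: (eqVneq s 0) => [es|ns].
  have xa : x = p v by rewrite hxs es subr0 scale1r scale0r addr0.
  split; first by left.
  rewrite xa; apply: (endp _ _ _ t c2) => //; by rewrite -xa.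
case: (eqVneq s 1) => [es|ns1].
  have xb : x = p w by rewrite hxs es subrr scale1r scale0r add0r.
  split; first by right.
  rewrite xb; apply: (endp _ _ _ t c2) => //; by rewrite -xb.
case: (eqVneq t 0) => [et|nt].
  have xc : x = p v' by rewrite hxt et subr0 scale1r scale0r addr0.
  split; last by left.
  rewrite xc; apply: (endp _ _ _ s c1) => //; by rewrite -xc.
case: (eqVneq t 1) => [et|nt1].
  have xd : x = p w' by rewrite hxt et subrr scale1r scale0r add0r.
  split; last by right.
  rewrite xd; apply: (endp _ _ _ s c1) => //; by rewrite -xd.
exfalso.
have s0' : 0 < s by rewrite lt_neqAle eq_sym ns s0.
have s1' : s < 1 by rewrite lt_neqAle ns1 s1.
have t0' : 0 < t by rewrite lt_neqAle eq_sym nt t0.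
have t1' : t < 1 by rewrite lt_neqAle nt1 t1.
have s2 : 0 < 1 - s by rewrite subr_gt0.
have t2 : 0 < 1 - t by rewrite subr_gt0.
case: (eqVneq v v') => [e1|h1].
  rewrite -e1 in c2 hx hdiff.
  have hww : w != w' by apply/negP => /eqP e2; apply: hdiff; left; rewrite e2; split.
  exact: (shared hconv hsym hne hpack c1 c2 hww hx s0' t0').
case: (eqVneq v w') => [e2|h2].
  rewrite -e2 in c2 hx hdiff.
  have hwv : w != v' by apply/negP => /eqP e3; apply: hdiff; right; rewrite e3; split.
  rewrite [in RHS]flip in hx.
  exact: (shared hconv hsym hne hpack c1 (contact_sym c2) hwv hx s0' t2).
case: (eqVneq w v') => [e3|h3].
  rewrite -e3 in c2 hx hdiff.
  have hvw' : v != w' by [].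
  rewrite [in LHS]flip in hx.
  exact: (shared hconv hsym hne hpack (contact_sym c1) c2 hvw' hx s2 t0').
case: (eqVneq w w') => [e4|h4].
  rewrite -e4 in c2 hx hdiff.
  rewrite [in LHS]flip [in RHS]flip in hx.
  exact: (shared hconv hsym hne hpack (contact_sym c1) (contact_sym c2) h1 hx s2 t2).
exact: hnp (crossV hconv hsym hne hpack c1 c2 h1 h2 h3 h4 hx s0' s1' t0' t1').
Qed.
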